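(* Let $f_1,f_2$ be strongly hyperbolic functions and let $p_1,p_2,p_3\in\mathbb{R}^2$ be three points in admissible position. Then either there exist $a_0>0$, $b_0,c_0\in\mathbb{R}$ such that $\overline{f_{a_0,b_0,c_0}}$ contains $p_1,p_2,p_3$, or there exist $s_0<0$, $t_0\in\mathbb{R}$ such that $\overline{l_{s_0,t_0}}$ contains $p_1,p_2,p_3$.
   Context: Identify $\mathbb{S}^1$ with $\mathbb{R}\cup\{\infty\}$, $\mathcal{P}=\mathbb{S}^1\times\mathbb{S}^1\supset\mathbb{R}^2$, $\mathbb{R}^+=(0,\infty)$. A function $f:\mathbb{R}^+\to\mathbb{R}^+$ is strongly hyperbolic if: (1) $\lim_{x\to0+}f(x)=+\infty$, $\lim_{x\to+\infty}f(x)=0$; (2) $f$ strictly convex; (3) $\lim_{x\to+\infty}f(x+b)/f(x)=1$ for each $b\in\mathbb{R}$; (4) $f$ differentiable; (5) $\ln|f'|$ strictly convex. For $a>0$, $b,c\in\mathbb{R}$: $f_{a,b,c}(x)=af_1(x+b)+c$ for $x>-b$, $f_{a,b,c}(x)=-af_2(-x-b)+c$ for $x<-b$; $\overline{f_{a,b,c}}=\{(x,f_{a,b,c}(x)):x\ne-b\}\cup\{(-b,\infty),(\infty,c)\}$; $\overline{l_{s,t}}=\{(x,sx+t):x\in\mathbb{R}\}\cup\{(\infty,\infty)\}$. Three points are in admissible position if they are all contained in one set of the form $\{(x,sx+t):x\in\mathbb{R}\}\cup\{(\infty,\infty)\}$ with $s<0$, or of the form $\{(x,y)\in\mathbb{R}^2:(x-b)(y-c)=a\}\cup\{(\infty,c),(b,\infty)\}$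 with $a>0$, $b,c\in\mathbb{R}$. *)

(* Defs.v *)
From Stdlib Require Import Reals.
From Coquelicot Require Import Coquelicot.
Open Scope R_scope.

Definition strictly_convex_pos (g : R -> R) : Prop :=
  forall x y t, 0 < x -> 0 < y -> x <> y -> 0 < t < 1 ->
    g (t * x + (1 - t) * y) < t * g x + (1 - t) * g y.

(* f : R^+ -> R^+ is represented by f : R -> R; only values on (0,+oo) matter. *)
Definition strongly_hyperbolic (f : R -> R) : Prop :=
  (forall x, 0 < x -> 0 < f x) /\
  filterlim f (at_right 0) (Rbar_locally p_infty) /\
  filterlim f (Rbar_locally p_infty) (locally 0) /\
  strictly_convex_pos f /\
  (* (3) *)
  (forall b : R, filterlim (fun x => f (x + b) / f x) (Rbar_locally p_infty) (locally 1)) /\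
  (forall x, 0 < x -> ex_derive f x) /\
  (* (5) *)
  strictly_convex_pos (fun x => ln (Rabs (Derive f x))).

(* f_{a,b,c} built from f1 (right of -b) and f2 (left of -b); value at -b irrelevant *)
Definition fabc (f1 f2 : R -> R) (a b c : R) (x : R) : R :=
  if Rlt_dec (- b) x then a * f1 (x + b) + c else - a * f2 (- x - b) + c.

(* a finite point p in R^2 belongs to the closed graph \overline{f_{a,b,c}} *)
Definition in_fbar (f1 f2 : R -> R) (a b c : R) (p : R * R) : Prop :=
  fst p <> - b /\ snd p = fabc f1 f2 a b c (fst p).

Definition in_lbar (s t : R) (p : R * R) : Prop := snd p = s * fst p + t.

Definition on_hyperbola (a b c : R) (p : R * R) : Prop :=
  (fst p - b) * (snd p - c) = a.

Definition admissible (p1 p2 p3 : R * R) : Prop :=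
  (exists s t, s < 0 /\ in_lbar s t p1 /\ in_lbar s t p2 /\ in_lbar s t p3) \/
  (exists a b c, a > 0 /\ on_hyperbola a b c p1 /\ on_hyperbola a b c p2 /\
                 on_hyperbola a b c p3).

(* Main.v *)
Require Import Defs.
From Stdlib Require Import Reals Lra Ranalysis5 Classical.
From Coquelicot Require Import Coquelicot.
Open Scope R_scope.

Lemma sh_pos f : strongly_hyperbolic f -> forall x, 0 < x -> 0 < f x.
Proof. intros H. apply H. Qed.

Lemma sh_inf f : strongly_hyperbolic f -> forall e, 0 < e -> exists M, forall x, M < x -> Rabs (f x) < e.
Proof.
  intros H e He. destruct H as (_ & _ & H & _).
  specialize (H (fun y => Rabs (y - 0) < e)).
  assert (HL : locally 0 (fun y => Rabs (y - 0) < e)) by (exists (mkposreal e He); intros y Hy; exact Hy).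
  specialize (H HL).
  destruct H as [M HM]. exists M. intros x Hx. specialize (HM x Hx).
  simpl in HM. now rewrite Rminus_0_r in HM.
Qed.

Lemma sh_chord f : strongly_hyperbolic f -> forall x y z, 0 < x -> x < y -> y < z ->
  f y * (z - x) < (z - y) * f x + (y - x) * f z.
Proof.
  intros H x y z Hx Hxy Hyz. destruct H as (_ & _ & _ & Hc & _).
  set (t := (z - y) / (z - x)).
  assert (Ht : 0 < t < 1).
  { unfold t; split. apply Rdiv_lt_0_compat; lra.
    apply (Rmult_lt_reg_r (z - x)); [lra|]. unfold Rdiv. rewrite Rmult_assoc, Rinv_l; lra. }
  specialize (Hc x z t Hx ltac:(lra) ltac:(lra) Ht).
  replace (t * x + (1 - t) * z) with y in Hc by (unfold t; field; lra).
  assert (E : t * (z - x) = z - y) by (unfold t; field; lra).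
  assert (E2 : (1 - t) * (z - x) = y - x) by (unfold t; field; lra).
  assert (Hzx : 0 < z - x) by lra.
  apply (Rmult_lt_compat_r (z - x)) in Hc; [|lra].
  rewrite Rmult_plus_distr_r in Hc.
  replace (t * f x * (z - x)) with (t * (z - x) * f x) in Hc by ring.
  replace ((1 - t) * f z * (z - x)) with ((1 - t) * (z - x) * f z) in Hc by ring.
  rewrite E, E2 in Hc. exact Hc.
Qed.

Lemma sh_dec f : strongly_hyperbolic f -> forall x y, 0 < x -> x < y -> f y < f x.
Proof.
  intros H x y Hx Hxy. destruct (Rlt_or_le (f y) (f x)) as [|Hle]; [assumption|exfalso].
  assert (Hz : forall z, y < z -> f y <= f z).
  { intros z Hz. destruct (Rlt_or_le (f z) (f y)) as [Hlt|]; [|assumption].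
    pose proof (sh_chord f H x y z Hx Hxy Hz). nra. }
  assert (Hpy : 0 < f y) by (apply (sh_pos f H); lra).
  destruct (sh_inf f H (f y) Hpy) as [M HM].
  set (z := Rmax M y + 1).
  assert (Hz1 : M < z) by (unfold z; pose proof (Rmax_l M y); lra).
  assert (Hz2 : y < z) by (unfold z; pose proof (Rmax_r M y); lra).
  specialize (HM z Hz1). specialize (Hz z Hz2).
  pose proof (Rle_abs (f z)). lra.
Qed.

Lemma sh_big f : strongly_hyperbolic f -> forall M d, 0 < d -> exists t, 0 < t < d /\ M < f t.
Proof.
  intros H M d Hd. destruct H as (_ & H & _).
  specialize (H (fun y => M < y)). 
  assert (HH : Rbar_locally p_infty (fun y => M < y)) by (exists M; auto).
  specialize (H HH). destruct H as [eps Heps].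
  set (t := Rmin eps d / 2).
  assert (Ht : 0 < t < Rmin eps d).
  { unfold t. pose proof (Rmin_glb_lt eps d 0 (cond_pos eps) Hd). lra. }
  exists t. pose proof (Rmin_r eps d). pose proof (Rmin_l eps d).
  split; [lra|]. apply Heps; [|lra].
  change (Rabs (t - 0) < eps). rewrite Rminus_0_r, Rabs_pos_eq; lra.
Qed.

Lemma sh_cont f : strongly_hyperbolic f -> forall x, 0 < x -> continuity_pt f x.
Proof.
  intros H x Hx. apply continuity_pt_filterlim.
  destruct H as (_ & _ & _ & _ & _ & Hd & _).
  exact (@ex_derive_continuous R_AbsRing R_NormedModule f x (Hd x Hx)).
Qed.

Lemma sh_der f : strongly_hyperbolic f -> forall x, 0 < x -> derivable_pt_lim f x (Derive f x).
Proof.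
  intros H x Hx. apply is_derive_Reals. apply Derive_correct.
  destruct H as (_ & _ & _ & _ & _ & Hd & _). apply Hd; exact Hx.
Qed.

Lemma sh_dleft f : strongly_hyperbolic f -> forall x y, 0 < x -> x < y ->
  Derive f x * (y - x) <= f y - f x.
Proof.
  intros H x y Hx Hxy. set (l := Derive f x).
  destruct (Rle_or_lt (l * (y - x)) (f y - f x)) as [|Hc]; [assumption|exfalso].
  set (S := (f y - f x) / (y - x)).
  assert (ES : f y - f x = S * (y - x)) by (unfold S; field; lra).
  assert (HlS : S < l) by nra.
  destruct (sh_der f H x Hx (l - S) ltac:(lra)) as [delta Hd].
  set (h := Rmin (delta / 2) ((y - x) / 2)).
  assert (Hh : 0 < h) by (unfold h; apply Rmin_glb_lt; pose proof (cond_pos delta); lra).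
  assert (Hh1 : h <= delta / 2) by apply Rmin_l.
  assert (Hh2 : h <= (y - x) / 2) by apply Rmin_r.
  specialize (Hd h ltac:(lra) ltac:(rewrite Rabs_pos_eq; pose proof (cond_pos delta); lra)).
  set (Q := (f (x + h) - f x) / h) in Hd.
  assert (EQ : f (x + h) - f x = Q * h) by (unfold Q; field; lra).
  pose proof (sh_chord f H x (x + h) y Hx ltac:(lra) ltac:(lra)) as Hch.
  assert (Hm : (f (x + h) - f x) * (y - x) < h * (f y - f x)) by nra.
  rewrite EQ, ES in Hm.
  assert (Q < S) by (apply (Rmult_lt_reg_r (h * (y - x))); [nra|nra]).
  apply Rabs_def2 in Hd. destruct Hd. unfold l in *. lra.
Qed.

Lemma sh_dright f : strongly_hyperbolic f -> forall x y, 0 < x -> x < y ->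
  f y - f x <= Derive f y * (y - x).
Proof.
  intros H x y Hx Hxy. set (l := Derive f y).
  destruct (Rle_or_lt (f y - f x) (l * (y - x))) as [|Hc]; [assumption|exfalso].
  set (S := (f y - f x) / (y - x)).
  assert (ES : f y - f x = S * (y - x)) by (unfold S; field; lra).
  assert (HlS : l < S) by nra.
  destruct (sh_der f H y ltac:(lra) (S - l) ltac:(lra)) as [delta Hd].
  set (h := - Rmin (delta / 2) ((y - x) / 2)).
  assert (Hh : 0 < - h) by (unfold h; rewrite Ropp_involutive; apply Rmin_glb_lt; pose proof (cond_pos delta); lra).
  assert (Hh1 : - h <= delta / 2) by (unfold h; rewrite Ropp_involutive; apply Rmin_l).
  assert (Hh2 : - h <= (y - x) / 2) by (unfold h; rewrite Ropp_involutive; apply Rmin_r).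
  specialize (Hd h ltac:(lra) ltac:(rewrite Rabs_left; pose proof (cond_pos delta); lra)).
  set (Q := (f (y + h) - f y) / h) in Hd.
  assert (EQ : f (y + h) - f y = Q * h) by (unfold Q; field; lra).
  pose proof (sh_chord f H x (y + h) y Hx ltac:(lra) ltac:(lra)) as Hch.
  assert (Hm : (f (y + h) - f y) * (y - x) < h * (f y - f x)) by nra.
  rewrite EQ, ES in Hm.
  assert (S < Q) by (apply (Rmult_lt_reg_r (- h * (y - x))); [nra|nra]).
  apply Rabs_def2 in Hd. destruct Hd. unfold l in *. lra.
Qed.

Lemma sh_ex_der f : strongly_hyperbolic f -> forall x, 0 < x -> ex_derive f x.
Proof. intros H. apply H. Qed.

Lemma sh_claim4 f : strongly_hyperbolic f -> forall h k T, 0 < h -> 1 < k ->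
  exists t, T <= t /\ 0 < t /\ - Derive f t < k * (- Derive f (t + h)).
Proof.
  intros H h k T Hh Hk.
  apply NNPP. intro Hn.
  set (T' := Rmax T 1).
  assert (HT1 : T <= T') by apply Rmax_l.
  assert (HT2 : 1 <= T') by apply Rmax_r.
  assert (Hn' : forall t, T' <= t -> Derive f t / k <= Derive f (t + h)).
  { intros t Ht. destruct (Rle_or_lt (Derive f t / k) (Derive f (t + h))) as [|Hc]; [assumption|].
    exfalso. apply Hn. exists t. split; [lra|]. split; [lra|].
    apply (Rmult_lt_compat_l k) in Hc; [|lra].
    replace (k * (Derive f t / k)) with (Derive f t) in Hc by (field; lra). lra. }
  set (g := fun t => f (t + h) - f t / k).
  assert (Hgd : forall t, 0 < t -> is_derive g t (Derive f (t + h) - Derive f t / k)).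
  { intros t Ht. unfold g. auto_derive.
    - split; [apply (sh_ex_der f H); lra|]. split; [apply (sh_ex_der f H); lra|]. auto.
    - change (Derive (fun x => f x)) with (Derive f). field. lra. }
  assert (Hmono : forall u v, T' <= u -> u <= v -> g u <= g v).
  { intros u v Hu Huv. destruct (Req_dec u v) as [->|Hne]; [lra|].
    destruct (MVT_gen g u v (fun t => Derive f (t + h) - Derive f t / k)) as [c [Hc Ec]].
    - intros x Hx. apply Hgd. rewrite Rmin_left in Hx; lra.
    - intros x Hx. rewrite Rmin_left in Hx by lra. apply continuity_pt_filterlim.
      apply (@ex_derive_continuous R_AbsRing R_NormedModule). exists (Derive f (x + h) - Derive f x / k).
      apply Hgd. lra.
    - rewrite Rmin_left, Rmax_right in Hc by lra.
      pose proof (Hn' c ltac:(lra)). nra. }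
  assert (Hg0 : forall t, T' <= t -> g t <= 0).
  { intros t Ht. destruct (Rle_or_lt (g t) 0) as [|Hp]; [assumption|exfalso].
    destruct (sh_inf f H (g t) Hp) as [M HM].
    set (s := Rmax M t + 1).
    assert (Hs1 : M < s) by (unfold s; pose proof (Rmax_l M t); lra).
    assert (Hs2 : t < s) by (unfold s; pose proof (Rmax_r M t); lra).
    specialize (HM (s + h) ltac:(lra)).
    pose proof (Hmono t s Ht ltac:(lra)).
    assert (0 < f s) by (apply (sh_pos f H); lra).
    assert (0 < f s / k) by (apply Rdiv_lt_0_compat; lra).
    pose proof (Rle_abs (f (s + h))). unfold g in *. lra. }
  destruct H as (Hp & _ & _ & _ & H3 & _).
  specialize (H3 h (fun y => Rabs (y - 1) < 1 - 1 / k)).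
  assert (HL : locally 1 (fun y => Rabs (y - 1) < 1 - 1 / k)).
  { assert (Hpos : 0 < 1 - 1 / k).
    { assert (1 / k < 1) by (apply (Rmult_lt_reg_r k); [lra|]; unfold Rdiv; rewrite Rmult_assoc, Rinv_l; lra). lra. }
    exists (mkposreal _ Hpos); intros y Hy; exact Hy. }
  specialize (H3 HL). destruct H3 as [M HM].
  set (t := Rmax M T' + 1).
  assert (Ht1 : M < t) by (unfold t; pose proof (Rmax_l M T'); lra).
  assert (Ht2 : T' <= t) by (unfold t; pose proof (Rmax_r M T'); lra).
  specialize (HM t Ht1). simpl in HM. specialize (Hg0 t Ht2). unfold g in Hg0.
  assert (Hft : 0 < f t) by (apply Hp; lra).
  set (q := f (t + h) / f t) in HM.
  assert (Eq : f (t + h) = q * f t) by (unfold q; field; lra).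
  apply Rabs_def2 in HM. destruct HM.
  assert (q * f t <= f t / k) by lra.
  assert (q <= 1 / k).
  { apply (Rmult_le_reg_r (f t)); [lra|]. unfold Rdiv in *. lra. }
  lra.
Qed.

Definition Fit f1 f2 p1 p2 p3 := exists a0 b0 c0, a0 > 0 /\ in_fbar f1 f2 a0 b0 c0 p1 /\
     in_fbar f1 f2 a0 b0 c0 p2 /\ in_fbar f1 f2 a0 b0 c0 p3.

Lemma cont_shift f c B : (forall x, 0 < x -> continuity_pt f x) -> 0 < c + B ->
  continuity_pt (fun B => f (c + B)) B.
Proof.
  intros Hc HB. apply (continuity_pt_comp (fun B => c + B) f B).
  - apply continuity_pt_plus; [apply continuity_pt_const; intros ? ?; reflexivity|apply continuity_pt_id].
  - apply Hc. exact HB.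
Qed.

Lemma cont_shiftn f c B : (forall x, 0 < x -> continuity_pt f x) -> 0 < - c - B ->
  continuity_pt (fun B => f (- c - B)) B.
Proof.
  intros Hc HB. apply (continuity_pt_comp (fun B => - c - B) f B).
  - apply continuity_pt_minus; [apply continuity_pt_const; intros ? ?; reflexivity|apply continuity_pt_id].
  - apply Hc. exact HB.
Qed.

Lemma caseA f1 f2 : strongly_hyperbolic f1 ->
  forall a b c x1 y1 x2 y2 x3 y3, 0 < a -> b < x1 -> x1 < x2 -> x2 < x3 ->
  (x1 - b) * (y1 - c) = a -> (x2 - b) * (y2 - c) = a -> (x3 - b) * (y3 - c) = a ->
  Fit f1 f2 (x1, y1) (x2, y2) (x3, y3).
Proof.
  intros H a b c x1 y1 x2 y2 x3 y3 Ha Hb H12 H23 E1 E2 E3.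
  set (f := f1).
  assert (Ey1 : y1 = c + a / (x1 - b)) by (field_simplify_eq; [lra|lra]).
  assert (Ey2 : y2 = c + a / (x2 - b)) by (field_simplify_eq; [lra|lra]).
  assert (Ey3 : y3 = c + a / (x3 - b)) by (field_simplify_eq; [lra|lra]).
  set (P := y1 - y2). set (Q := y2 - y3).
  assert (EP : P = a * (x2 - x1) / ((x1 - b) * (x2 - b))) by (unfold P; rewrite Ey1, Ey2; field; lra).
  assert (EQ : Q = a * (x3 - x2) / ((x2 - b) * (x3 - b))) by (unfold Q; rewrite Ey2, Ey3; field; lra).
  assert (HP : 0 < P) by (rewrite EP; apply Rdiv_lt_0_compat; nra).
  assert (HQ : 0 < Q) by (rewrite EQ; apply Rdiv_lt_0_compat; nra).
  set (k := (x3 - b) / (x1 - b)).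
  assert (Hk : 1 < k) by (unfold k; apply (Rmult_lt_reg_r (x1 - b)); [lra|]; field_simplify; lra).
  assert (EK : Q * (x2 - x1) * k = P * (x3 - x2)) by (rewrite EP, EQ; unfold k; field; lra).
  set (psi := fun B => Q * (f (x1 + B) - f (x2 + B)) - P * (f (x2 + B) - f (x3 + B))).
  destruct (sh_big f H ((P + Q) * f (x2 - x1) / Q) 1 ltac:(lra)) as [t0 [Ht0 Hft0]].
  set (Blo := t0 - x1).
  assert (Hlo : 0 < psi Blo).
  { unfold psi, Blo.
    replace (x1 + (t0 - x1)) with t0 by ring.
    assert (f (x2 + (t0 - x1)) < f (x2 - x1)) by (apply (sh_dec f H); lra).
    assert (0 < f (x3 + (t0 - x1))) by (apply (sh_pos f H); lra).
    assert ((P + Q) * f (x2 - x1) < Q * f t0).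
    { apply (Rmult_lt_compat_l Q) in Hft0; [|lra].
      replace (Q * ((P + Q) * f (x2 - x1) / Q)) with ((P + Q) * f (x2 - x1)) in Hft0 by (field; lra). lra. }
    nra. }
  destruct (sh_claim4 f H (x3 - x1) k (t0 + 1) ltac:(lra) Hk) as [t [Ht1 [Ht2 Hd]]].
  set (Bhi := t - x1).
  assert (Hhi : psi Bhi < 0).
  { unfold psi, Bhi.
    replace (x1 + (t - x1)) with t by ring.
    replace (x2 + (t - x1)) with (t + (x2 - x1)) by ring.
    replace (x3 + (t - x1)) with (t + (x3 - x1)) by ring.
    pose proof (sh_dleft f H t (t + (x2 - x1)) ltac:(lra) ltac:(lra)) as D1.
    pose proof (sh_dright f H (t + (x2 - x1)) (t + (x3 - x1)) ltac:(lra) ltac:(lra)) as D2.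
    replace (t + (x2 - x1) - t) with (x2 - x1) in D1 by ring.
    replace (t + (x3 - x1) - (t + (x2 - x1))) with (x3 - x2) in D2 by ring.
    assert (Q * (x2 - x1) * (- Derive f t) < Q * (x2 - x1) * (k * - Derive f (t + (x3 - x1)))).
    { apply Rmult_lt_compat_l; [nra|exact Hd]. }
    assert (Q * (f t - f (t + (x2 - x1))) <= Q * ((x2 - x1) * - Derive f t)) by (apply Rmult_le_compat_l; lra).
    assert (P * ((x3 - x2) * - Derive f (t + (x3 - x1))) <= P * (f (t + (x2 - x1)) - f (t + (x3 - x1)))) by (apply Rmult_le_compat_l; lra).
    assert (Q * (x2 - x1) * (k * - Derive f (t + (x3 - x1))) = P * ((x3 - x2) * - Derive f (t + (x3 - x1)))).
    { set (X := - Derive f (t + (x3 - x1))). replace (P * ((x3 - x2) * X)) with (P * (x3 - x2) * X) by ring. rewrite <- EK. ring. }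
    lra. }
  assert (Hcont : forall B, Blo <= B <= Bhi -> continuity_pt (fun B => - psi B) B).
  { intros B HB. unfold psi. unfold Blo, Bhi in HB.
    pose proof (sh_cont f H) as Hc.
    apply continuity_pt_opp. apply continuity_pt_minus; apply continuity_pt_scal;
      apply continuity_pt_minus; apply cont_shift; auto; lra. }
  destruct (IVT_interv (fun B => - psi B) Blo Bhi Hcont ltac:(unfold Blo, Bhi; lra) ltac:(lra) ltac:(lra))
    as [B [HB HpsiB]].
  unfold Blo, Bhi in HB.
  assert (Hpsi : psi B = 0) by lra. unfold psi in Hpsi.
  set (F1 := f (x1 + B)) in *. set (F2 := f (x2 + B)) in *. set (F3 := f (x3 + B)) in *.
  assert (HF12 : F2 < F1) by (apply (sh_dec f H); lra).
  set (a0 := P / (F1 - F2)).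
  exists a0, B, (y1 - a0 * F1).
  assert (Ha0 : 0 < a0) by (apply Rdiv_lt_0_compat; lra).
  assert (Ea0 : a0 * (F1 - F2) = P) by (unfold a0; field; lra).
  assert (Ea3 : a0 * (F2 - F3) = Q).
  { apply (Rmult_eq_reg_r (F1 - F2)); [|lra].
    replace (a0 * (F2 - F3) * (F1 - F2)) with (a0 * (F1 - F2) * (F2 - F3)) by ring.
    rewrite Ea0. lra. }
  split; [lra|]. unfold in_fbar, fabc; simpl.
  split; [split; [lra|]|split; [split; [lra|]|split; [lra|]]];
  (destruct (Rlt_dec (- B) _); [|lra]); unfold f in *; fold F1 F2 F3; unfold P, Q in *; lra.
Qed.

Lemma caseB f1 f2 : strongly_hyperbolic f1 -> strongly_hyperbolic f2 ->
  forall a b c x1 y1 x2 y2 x3 y3, 0 < a -> x1 < b -> b < x2 -> x2 < x3 ->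
  (x1 - b) * (y1 - c) = a -> (x2 - b) * (y2 - c) = a -> (x3 - b) * (y3 - c) = a ->
  Fit f1 f2 (x1, y1) (x2, y2) (x3, y3).
Proof.
  intros H1 H2 a b c x1 y1 x2 y2 x3 y3 Ha Hb1 Hb2 H23 E1 E2 E3.
  assert (Ey2 : y2 = c + a / (x2 - b)) by (field_simplify_eq; [lra|lra]).
  assert (Ey3 : y3 = c + a / (x3 - b)) by (field_simplify_eq; [lra|lra]).
  set (P := y2 - y1). set (Q := y2 - y3).
  assert (HQ : 0 < Q).
  { assert (EQ : Q = a * (x3 - x2) / ((x2 - b) * (x3 - b))) by (unfold Q; rewrite Ey2, Ey3; field; lra).
    rewrite EQ; apply Rdiv_lt_0_compat; nra. }
  assert (HPQ : Q < P).
  { unfold P, Q. assert (y1 < c) by nra. assert (c < y3) by nra. lra. }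
  set (psi := fun B => P * (f1 (x2 + B) - f1 (x3 + B)) - Q * (f1 (x2 + B) + f2 (- x1 - B))).
  set (d := (x2 - x1) / 2).
  assert (Hd : 0 < d) by (unfold d; lra).
  destruct (sh_big f1 H1 ((P * f1 (x3 - x2) + Q * f2 d) / (P - Q)) d Hd) as [t [Ht Hft]].
  set (Blo := t - x2).
  assert (Hlo : 0 < psi Blo).
  { unfold psi, Blo.
    replace (x2 + (t - x2)) with t by ring.
    replace (- x1 - (t - x2)) with (x2 - x1 - t) by ring.
    assert (f1 (x3 + (t - x2)) < f1 (x3 - x2)) by (apply (sh_dec f1 H1); lra).
    assert (f2 (x2 - x1 - t) < f2 d) by (apply (sh_dec f2 H2); unfold d in *; lra).
    assert (P * f1 (x3 - x2) + Q * f2 d < (P - Q) * f1 t).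
    { apply (Rmult_lt_compat_l (P - Q)) in Hft; [|lra].
      replace ((P - Q) * ((P * f1 (x3 - x2) + Q * f2 d) / (P - Q))) with (P * f1 (x3 - x2) + Q * f2 d) in Hft by (field; lra). lra. }
    assert (P * f1 (x3 + (t - x2)) < P * f1 (x3 - x2)) by (apply Rmult_lt_compat_l; lra).
    assert (Q * f2 (x2 - x1 - t) < Q * f2 d) by (apply Rmult_lt_compat_l; lra).
    lra. }
  destruct (sh_big f2 H2 ((P - Q) * f1 d / Q) d Hd) as [s [Hs Hfs]].
  set (Bhi := - x1 - s).
  assert (Hhi : psi Bhi < 0).
  { unfold psi, Bhi.
    replace (- x1 - (- x1 - s)) with s by ring.
    replace (x2 + (- x1 - s)) with (x2 - x1 - s) by ring.
    assert (f1 (x2 - x1 - s) < f1 d) by (apply (sh_dec f1 H1); unfold d in *; lra).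
    assert (0 < f1 (x3 + (- x1 - s))) by (apply (sh_pos f1 H1); unfold d in *; lra).
    assert ((P - Q) * f1 d < Q * f2 s).
    { apply (Rmult_lt_compat_l Q) in Hfs; [|lra].
      replace (Q * ((P - Q) * f1 d / Q)) with ((P - Q) * f1 d) in Hfs by (field; lra). lra. }
    assert ((P - Q) * f1 (x2 - x1 - s) < (P - Q) * f1 d) by (apply Rmult_lt_compat_l; lra).
    assert (0 < P * f1 (x3 + (- x1 - s))) by (apply Rmult_lt_0_compat; lra).
    lra. }
  assert (Hcont : forall B, Blo <= B <= Bhi -> continuity_pt (fun B => - psi B) B).
  { intros B HB. unfold psi. unfold Blo, Bhi in HB.
    pose proof (sh_cont f1 H1) as Hc1. pose proof (sh_cont f2 H2) as Hc2.
    apply continuity_pt_opp. apply continuity_pt_minus; apply continuity_pt_scal.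
    - apply continuity_pt_minus; apply cont_shift; auto; lra.
    - apply continuity_pt_plus; [apply cont_shift|apply cont_shiftn]; auto; lra. }
  destruct (IVT_interv (fun B => - psi B) Blo Bhi Hcont ltac:(unfold Blo, Bhi, d in *; lra) ltac:(lra) ltac:(lra))
    as [B [HB HpsiB]].
  unfold Blo, Bhi in HB.
  assert (Hpsi : psi B = 0) by lra. unfold psi in Hpsi.
  set (F2 := f1 (x2 + B)) in *. set (F3 := f1 (x3 + B)) in *. set (G := f2 (- x1 - B)) in *.
  assert (HF2 : 0 < F2) by (apply (sh_pos f1 H1); lra).
  assert (HG : 0 < G) by (apply (sh_pos f2 H2); lra).
  set (a0 := P / (F2 + G)).
  exists a0, B, (y2 - a0 * F2).
  assert (Ha0 : 0 < a0) by (apply Rdiv_lt_0_compat; lra).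
  assert (Ea0 : a0 * (F2 + G) = P) by (unfold a0; field; lra).
  assert (Ea3 : a0 * (F2 - F3) = Q).
  { apply (Rmult_eq_reg_r (F2 + G)); [|lra].
    replace (a0 * (F2 - F3) * (F2 + G)) with (a0 * (F2 + G) * (F2 - F3)) by ring.
    rewrite Ea0. lra. }
  split; [lra|]. unfold in_fbar, fabc; simpl.
  split; [split; [lra|]|split; [split; [lra|]|split; [lra|]]].
  - destruct (Rlt_dec (- B) x1); [lra|]. fold G. unfold P in *. lra.
  - destruct (Rlt_dec (- B) x2); [|lra]. fold F2. lra.
  - destruct (Rlt_dec (- B) x3); [|lra]. fold F3. unfold P, Q in *. lra.
Qed.

Lemma refl_fbar f1 f2 a b c x y : in_fbar f2 f1 a b c (- x, - y) -> in_fbar f1 f2 a (- b) (- c) (x, y).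
Proof.
  unfold in_fbar, fabc; simpl. intros [Hne Hy]. split; [lra|].
  destruct (Rlt_dec (- b) (- x)); destruct (Rlt_dec (- - b) x); try lra.
  - replace (- x - - b) with (- x + b) by ring. lra.
  - replace (x + - b) with (- - x - b) by ring. lra.
Qed.

Lemma refl_fit f1 f2 x1 y1 x2 y2 x3 y3 :
  Fit f2 f1 (- x3, - y3) (- x2, - y2) (- x1, - y1) -> Fit f1 f2 (x1, y1) (x2, y2) (x3, y3).
Proof.
  intros (a0 & b0 & c0 & Ha & A3 & A2 & A1).
  exists a0, (- b0), (- c0). split; [lra|]. split; [|split]; apply refl_fbar; assumption.
Qed.

Lemma core f1 f2 : strongly_hyperbolic f1 -> strongly_hyperbolic f2 ->
  forall a b c x1 y1 x2 y2 x3 y3, 0 < a -> x1 < x2 -> x2 < x3 ->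
  (x1 - b) * (y1 - c) = a -> (x2 - b) * (y2 - c) = a -> (x3 - b) * (y3 - c) = a ->
  Fit f1 f2 (x1, y1) (x2, y2) (x3, y3).
Proof.
  intros H1 H2 a b c x1 y1 x2 y2 x3 y3 Ha H12 H23 E1 E2 E3.
  assert (N1 : x1 <> b) by (intro Hx; rewrite Hx in E1; replace (b - b) with 0 in E1 by ring; lra).
  assert (N2 : x2 <> b) by (intro Hx; rewrite Hx in E2; replace (b - b) with 0 in E2 by ring; lra).
  assert (N3 : x3 <> b) by (intro Hx; rewrite Hx in E3; replace (b - b) with 0 in E3 by ring; lra).
  destruct (Rlt_or_le b x1) as [L1|L1].
  { eapply caseA; eauto. }
  assert (L1' : x1 < b) by (destruct (Rle_lt_or_eq_dec _ _ L1); [auto|congruence]).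
  destruct (Rlt_or_le b x2) as [L2|L2].
  { apply (caseB f1 f2 H1 H2 a b c); auto. }
  assert (L2' : x2 < b) by (destruct (Rle_lt_or_eq_dec _ _ L2); [auto|congruence]).
  destruct (Rlt_or_le b x3) as [L3|L3].
  { apply refl_fit. apply (caseB f2 f1 H2 H1 a (- b) (- c)); try lra;
    try (rewrite <- E3; ring); try (rewrite <- E2; ring); try (rewrite <- E1; ring). }
  assert (L3' : x3 < b) by (destruct (Rle_lt_or_eq_dec _ _ L3); [auto|congruence]).
  { apply refl_fit. apply (caseA f2 f1 H2 a (- b) (- c)); try lra;
    try (rewrite <- E3; ring); try (rewrite <- E2; ring); try (rewrite <- E1; ring). }
Qed.

Theorem lemma4p7 (f1 f2 : R -> R) (p1 p2 p3 : R * R) :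
  strongly_hyperbolic f1 -> strongly_hyperbolic f2 ->
  p1 <> p2 -> p1 <> p3 -> p2 <> p3 ->
  admissible p1 p2 p3 ->
  (exists a0 b0 c0, a0 > 0 /\ in_fbar f1 f2 a0 b0 c0 p1 /\
     in_fbar f1 f2 a0 b0 c0 p2 /\ in_fbar f1 f2 a0 b0 c0 p3) \/
  (exists s0 t0, s0 < 0 /\ in_lbar s0 t0 p1 /\ in_lbar s0 t0 p2 /\ in_lbar s0 t0 p3).
Proof.
  intros H1 H2 D12 D13 D23 [Hl | (a & b & c & Ha & E1 & E2 & E3)].
  { right. exact Hl. }
  left. destruct p1 as [x1 y1], p2 as [x2 y2], p3 as [x3 y3].
  unfold on_hyperbola in *; simpl in *.
  assert (Hdist : forall u v w z, (u - b) * (v - c) = a -> (w - b) * (z - c) = a -> (u, v) <> (w, z) -> u <> w).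
  { intros u v w z Ea Eb Hne Huw. subst w. apply Hne. f_equal.
    assert (u - b <> 0) by (intro Hz; rewrite Hz in Ea; lra).
    apply (Rmult_eq_reg_l (u - b)); [lra|assumption]. }
  pose proof (Hdist _ _ _ _ E1 E2 D12). pose proof (Hdist _ _ _ _ E1 E3 D13).
  pose proof (Hdist _ _ _ _ E2 E3 D23).
  destruct (Rlt_or_le x1 x2); destruct (Rlt_or_le x2 x3); destruct (Rlt_or_le x1 x3);
  first
  [ destruct (core f1 f2 H1 H2 a b c x1 y1 x2 y2 x3 y3 Ha ltac:(lra) ltac:(lra) E1 E2 E3) as (a0 & b0 & c0 & ?)
  | destruct (core f1 f2 H1 H2 a b c x1 y1 x3 y3 x2 y2 Ha ltac:(lra) ltac:(lra) E1 E3 E2) as (a0 & b0 & c0 & ?)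
  | destruct (core f1 f2 H1 H2 a b c x2 y2 x1 y1 x3 y3 Ha ltac:(lra) ltac:(lra) E2 E1 E3) as (a0 & b0 & c0 & ?)
  | destruct (core f1 f2 H1 H2 a b c x2 y2 x3 y3 x1 y1 Ha ltac:(lra) ltac:(lra) E2 E3 E1) as (a0 & b0 & c0 & ?)
  | destruct (core f1 f2 H1 H2 a b c x3 y3 x1 y1 x2 y2 Ha ltac:(lra) ltac:(lra) E3 E1 E2) as (a0 & b0 & c0 & ?)
  | destruct (core f1 f2 H1 H2 a b c x3 y3 x2 y2 x1 y1 Ha ltac:(lra) ltac:(lra) E3 E2 E1) as (a0 & b0 & c0 & ?)
  | exfalso; lra ];
  exists a0, b0, c0; tauto.
Qed.
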